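(* Let $G$ be a finite group of order $n$, let $\alpha,\beta:G\to\mathbb{Q}$ be class functions with $\alpha(g)=\alpha(g^{-1})$ and $\beta(g)=\beta(g^{-1})$ for all $g\in G$, and let $K$ be a field with $\mathbb{Q}\subseteq K\subseteq\mathbb{Q}(\zeta_n)$. Let $H_K=\eta(\operatorname{Gal}(\mathbb{Q}(\zeta_n)/K))$, $H_\alpha(K)=\{h\in H_K\mid \alpha^h=\alpha\}$ and $H_\beta(K)=\{h\in H_K\mid \beta^h=\beta\}$. If $H_\alpha(K)=H_\beta(K)$, then all eigenvalues of $\operatorname{Cay}(G,\alpha)$ lie in $K$ if and only if all eigenvalues of $\operatorname{Cay}(G,\beta)$ lie in $K$.
   Context: $\zeta_n=e^{2\pi i/n}$; $\eta:\operatorname{Gal}(\mathbb{Q}(\zeta_n)/\mathbb{Q})\to\mathbb{Z}_n^*$ is the isomorphism with $\sigma(\zeta_n)=\zeta_n^{\eta(\sigma)}$. For $h\in\mathbb{Z}_n^*$, $\alpha^h(g)=\alpha(g^h)$. The Cayley colour graph $\operatorname{Cay}(G,f)$ has vertex set $G$ and adjacency matrix $[f(gh^{-1})]_{g,h\in G}$; its eigenvalues are those of this matrix. *)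

(* Defs.v *)
From HB Require Import structures.
From mathcomp Require Import all_boot all_order all_algebra all_fingroup all_field.
Set Implicit Arguments. Unset Strict Implicit. Unset Printing Implicit Defensive.
Import GRing.Theory Num.Theory.
Local Open Scope ring_scope.

Definition sym_class_fun (gT : finGroupType) (a : gT -> rat) : Prop :=
  (forall x y : gT, a (x ^ y)%g = a x) /\ (forall x : gT, a (x^-1)%g = a x).

Definition in_Qz (z x : algC) : Prop :=
  exists p : {poly rat}, x = (map_poly ratr p).[z].

(* K is a subfield of algC with Q <= K <= Q(z) (Q <= K is automatic) *)
Definition intermediate_field (z : algC) (K : {pred algC}) : Prop :=
  GRing.divring_closed K /\ (forall x, x \in K -> in_Qz z x).

(* k (mod n) lies in H_K = eta(Gal(Q(z)/K)): k is a unit mod n and the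
   automorphism z |-> z^k of Q(z) fixes K; automorphisms of Q(z) are
   represented by (extensions to) ring endomorphisms of algC. *)
Definition in_HK (n : nat) (z : algC) (K : {pred algC}) (k : nat) : Prop :=
  coprime k n /\
  exists s : {rmorphism algC -> algC},
    s z = z ^+ k /\ (forall x, x \in K -> s x = x).

(* alpha^k = alpha, where alpha^k(g) = alpha(g^k) *)
Definition pow_fixed (gT : finGroupType) (a : gT -> rat) (k : nat) : Prop :=
  forall g : gT, a (g ^+ k)%g = a g.

Definition cay_mx (gT : finGroupType) (a : gT -> rat) : 'M[algC]_#|gT| :=
  \matrix_(i, j) ratr (a (enum_val i * (enum_val j)^-1)%g).

Definition all_eigs_in (gT : finGroupType) (a : gT -> rat) (K : {pred algC}) : Prop :=
  forall l : algC, eigenvalue (cay_mx a) l -> l \in K.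

(* Main.v *)
Require Import Defs.
From HB Require Import structures.
From mathcomp Require Import all_boot all_order all_algebra all_fingroup all_field.
From mathcomp Require Import all_solvable all_character.
From mathcomp Require Import ring.
From Stdlib Require Import Classical.
Set Implicit Arguments. Unset Strict Implicit. Unset Printing Implicit Defensive.
Import GRing.Theory Num.Theory.
Local Open Scope ring_scope.


Section Cay.
Variable gT : finGroupType.

Definition cmx (f : gT -> algC) : 'M[algC]_#|gT| :=
  \matrix_(i, j) f (enum_val i * (enum_val j)^-1)%g.
Definition conv (f g : gT -> algC) x := \sum_h f h * g (h^-1 * x)%g.

Lemma sum_enumT (F : gT -> algC) : \sum_(i < #|gT|) F (enum_val i) = \sum_h F h.
Proof. by rewrite -big_enum_val. Qed.

Lemma cmxM f g : cmx f *m cmx g = cmx (conv f g).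
Proof.
apply/matrixP=> i j; rewrite !mxE.
rewrite (eq_bigr (fun c => f (enum_val i * (enum_val c)^-1)%g * g (enum_val c * (enum_val j)^-1)%g)); last by move=> c _; rewrite !mxE.
rewrite (sum_enumT (fun y => f (enum_val i * y^-1)%g * g (y * (enum_val j)^-1)%g)).
rewrite (reindex_inj (inj_comp (mulIg (enum_val i)) (@invg_inj gT))).
rewrite /conv; apply: eq_bigr => h _ /=.
by rewrite invMg invgK mulgA mulgV mul1g mulgA.
Qed.

Lemma cmx_delta : cmx (fun x => (x == 1%g)%:R) = 1%:M.
Proof.
apply/matrixP=> i j; rewrite !mxE; congr (_%:R).
by rewrite -(inj_eq (mulIg (enum_val j))) mulgKV mul1g (inj_eq enum_val_inj).
Qed.

Lemma cmx_sum I (r : seq I) (F : I -> gT -> algC) :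
  cmx (fun x => \sum_(i <- r) F i x) = \sum_(i <- r) cmx (F i).
Proof. by apply/matrixP=> i j; rewrite !mxE summxE; apply: eq_bigr => k _; rewrite mxE. Qed.

Lemma cmx_scale c f : cmx (fun x => c * f x) = c *: cmx f.
Proof. by apply/matrixP=> i j; rewrite !mxE. Qed.

Lemma conv_comm f g : (forall x y, g (x ^ y)%g = g x) -> conv f g =1 conv g f.
Proof.
move=> gJ x; rewrite /conv [RHS](reindex_inj (inj_comp (mulgI x) (@invg_inj gT))) /=.
apply: eq_bigr => u _; rewrite invMg invgK mulgKV mulrC; congr (_ * _).
by rewrite -[RHS](gJ _ u) conjgE !mulgA -(mulgA _ u^-1%g) mulVg mulg1.
Qed.

End Cay.


Section Pow.
Variable gT : finGroupType.

Lemma pow_inv_exists k : coprime k #|gT| ->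
  exists k', forall h : gT, ((h ^+ k) ^+ k' = h)%g.
Proof.
move=> ck; exists (k ^ (totient #|gT|).-1)%N => h.
have hn : (h ^+ #|gT| = 1)%g by rewrite -cardsT expg_cardG ?inE.
have n_gt0 : (0 < #|gT|)%N by apply/card_gt0P; exists h.
rewrite -expgM -expnS prednK ?totient_gt0 //.
by rewrite -(expg_mod _ hn) Euler_exp_totient // (expg_mod _ hn) expg1.
Qed.

End Pow.


Section Qz.
Variable z : algC.
Lemma in_QzD x y : in_Qz z x -> in_Qz z y -> in_Qz z (x + y).
Proof. by move=> [p ->] [q ->]; exists (p + q); rewrite rmorphD hornerD. Qed.
Lemma in_QzM x y : in_Qz z x -> in_Qz z y -> in_Qz z (x * y).
Proof. by move=> [p ->] [q ->]; exists (p * q); rewrite rmorphM hornerM. Qed.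
Lemma in_Qz_rat c : in_Qz z (ratr c).
Proof. by exists c%:P; rewrite map_polyC hornerC. Qed.
Lemma in_Qz_exp m : in_Qz z (z ^+ m).
Proof. by exists 'X^m; rewrite map_polyXn hornerXn. Qed.
Lemma in_Qz_sum I (r : seq I) (F : I -> algC) :
  (forall i, in_Qz z (F i)) -> in_Qz z (\sum_(i <- r) F i).
Proof.
move=> H; elim: r => [|i r IH]; first by rewrite big_nil; exists 0; rewrite rmorph0 horner0.
by rewrite big_cons; apply: in_QzD.
Qed.
End Qz.

Section G1.
Variable gT : finGroupType.

Lemma chi_aut (z : algC) (s : {rmorphism algC -> algC}) k
    (i : Iirr [set: gT]) (x : gT) :
  #|gT|.-primitive_root z -> s z = z ^+ k ->
  s ('chi_i x) = 'chi_i (x ^+ k)%g /\ in_Qz z ('chi_i x).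
Proof.
move=> pz sz.
have Gx : x \in [set: gT] by rewrite inE.
have [e [[B uB rGx] [e1 _] [chix _] _]] := repr_rsim_diag 'Chi_i Gx.
rewrite irrRepr in chix.
have en j : exists m, e 0 j = z ^+ m.
  have : e 0 j ^+ #|gT| = 1.
    have /dvdnP[c ->] : (#[x]%g %| #|gT|)%N by rewrite -cardsT order_dvdG.
    by rewrite mulnC exprM e1 expr1n.
  by case/(prim_rootP pz) => m ->; exists m.
split; last first.
  rewrite chix; apply: in_Qz_sum => j; have [m ->] := en j; exact: in_Qz_exp.
have pw m : 'Chi_i (x ^+ m)%g = invmx B *m diag_mx (\row_j (e 0 j) ^+ m) *m B.
  elim: m => [|m IH].
    rewrite expg0 repr_mx1.
    have -> : diag_mx (\row_j (e 0 j) ^+ 0) = 1%:M.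
      by apply/matrixP=> a b; rewrite !mxE; case: (a == b).
    by rewrite mulmx1 mulVmx.
  rewrite expgS repr_mxM ?groupX // IH rGx !mulmxA (mulmxK uB) -(mulmxA _ (diag_mx e)).
  rewrite mulmx_diag; congr (_ *m _ *m _); congr diag_mx; apply/rowP=> j.
  by rewrite !mxE exprS.
rewrite chix rmorph_sum -irrRepr cfunE groupX // pw.
rewrite mulr1n mxtrace_mulC mulmxA mulmxV // mul1mx mxtrace_diag.
apply: eq_bigr => j _; rewrite mxE; have [m ->] := en j.
by rewrite rmorphXn sz -!exprM mulnC.
Qed.
End G1.


Section Eig.
Variable gT : finGroupType.
Local Notation G := [set: gT].

Lemma cf_of (a : gT -> algC) : (forall x y, a (x ^ y)%g = a x) ->
  exists phi : 'CF(G), forall x, phi x = a x.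
Proof.
move=> aJ.
have P : is_class_fun <<G>>%g (finfun a).
  by rewrite genGid; apply: intro_class_fun => [x y _ _|x]; rewrite ?aJ // inE.
by exists (Cfun 0 P) => x; rewrite cfunE.
Qed.

Definition omega (a : gT -> algC) (i : Iirr G) :=
  (\sum_h a h * 'chi_i (h^-1)%g) / 'chi_i 1%g.

Lemma sumG (F : gT -> algC) : \sum_(x in G) F x = \sum_x F x.
Proof. by apply: eq_bigl => x; rewrite inE. Qed.

Lemma cardG_neq0 : (#|G|%:R : algC) != 0.
Proof. by rewrite pnatr_eq0 -lt0n cardsT; apply/card_gt0P; exists 1%g. Qed.

Lemma conv_irr a (aJ : forall x y, a (x ^ y)%g = a x) i x :
  conv a ('chi_i) x = omega a i * 'chi_i x.
Proof.
have [phi Hphi] := cf_of aJ.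
have E h : a h = \sum_j '[phi, 'chi_j] * 'chi_j h.
  by rewrite -Hphi {1}(cfun_sum_cfdot phi) sum_cfunE; apply: eq_bigr => j _; rewrite cfunE.
have GO j : \sum_h 'chi_j h * 'chi_i (h^-1 * x)%g
    = #|G|%:R * ((i == j)%:R * ('chi_i x / 'chi_i 1%g)).
  rewrite -(generalized_orthogonality_relation x i j) mulrA mulfV ?cardG_neq0 // mul1r.
  rewrite sumG (reindex_inj (@invg_inj gT)) /=; apply: eq_bigr => h _.
  by rewrite invgK mulrC.
rewrite /conv (eq_bigr (fun h => \sum_j '[phi, 'chi_j] * ('chi_j h * 'chi_i (h^-1 * x)%g))); last first.
  by move=> h _; rewrite E big_distrl; apply: eq_bigr => j _; rewrite mulrA.
rewrite exchange_big /= (eq_bigr (fun j => '[phi, 'chi_j] * (#|G|%:R * ((i == j)%:R * ('chi_i x / 'chi_i 1%g))))); last first.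
  by move=> j _; rewrite -big_distrr GO.
rewrite (bigD1 i) //= big1 ?addr0; last first.
  by move=> j /negbTE; rewrite eq_sym => ->; rewrite mul0r !mulr0.
rewrite eqxx mul1r cfdotE /omega sumG.
rewrite (eq_bigr (fun h => a h * 'chi_i h^-1%g)); last by move=> h _; rewrite Hphi irr_inv.
have n0 := @cardG_neq0; have d0 := irr1_neq0 i; rewrite /=; field; apply/andP; split; [exact: d0 | exact: n0].
Qed.

Lemma cmx_ext (f g : gT -> algC) : f =1 g -> cmx f = cmx g.
Proof. by move=> fg; apply/matrixP=> i j; rewrite !mxE fg. Qed.

Lemma eig_omega (a : gT -> rat) (aJ : forall x y, a (x ^ y)%g = a x) (l : algC) :
  eigenvalue (cay_mx a) l <-> exists i, l = omega (fun g => ratr (a g)) i.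
Proof.
pose b := fun g => ratr (a g) : algC.
have bJ : forall x y, b (x ^ y)%g = b x by move=> x y; rewrite /b aJ.
have Ab : cay_mx a = cmx b by [].
have AE i : cay_mx a *m cmx ('chi_i) = omega b i *: cmx ('chi[G]_i).
  by rewrite Ab cmxM -cmx_scale; apply: cmx_ext => x; apply: conv_irr.
have EA i : cmx ('chi_i) *m cay_mx a = omega b i *: cmx ('chi[G]_i).
  rewrite Ab cmxM -cmx_scale; apply: cmx_ext => x.
  rewrite -conv_comm; first exact: conv_irr.
  by move=> ? ?; rewrite cfunJ ?inE.
have SE : \sum_i 'chi_i 1%g *: cmx ('chi[G]_i) = #|G|%:R *: 1%:M.
  rewrite (eq_bigr _ (fun i _ => esym (cmx_scale _ _))) -cmx_sum -cmx_delta -cmx_scale.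
  apply: cmx_ext => x; rewrite mulr_natr -(@cfRegE _ [set: gT]%G) cfReg_sum sum_cfunE.
  by apply: eq_bigr => i _; rewrite cfunE.
split.
  move/eigenvalueP=> [v vA nz].
  have [i nzi | all0] := pickP (fun i => v *m cmx ('chi[G]_i) != 0); last first.
    case/negP: nz; have : v *m (#|G|%:R *: 1%:M) = 0.
      rewrite -SE mulmx_sumr big1 // => i _; rewrite -scalemxAr.
      by move/negbFE/eqP: (all0 i) => ->; rewrite scaler0.
    by rewrite -scalemxAr mulmx1 => /eqP; rewrite scaler_eq0 (negbTE cardG_neq0).
  exists i; apply/eqP; rewrite -subr_eq0.
  have : (l - omega b i) *: (v *m cmx ('chi_i)) == 0.
    by rewrite scalerBl scalemxAl -vA -mulmxA AE -scalemxAr subrr.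
  by rewrite scaler_eq0 (negbTE nzi) orbF.
case=> i ->; apply/eigenvalueP; exists (row (enum_rank 1%g) (cmx ('chi[G]_i))).
  by rewrite -row_mul EA; apply/rowP=> j; rewrite !mxE.
apply/negP=> /eqP/rowP/(_ (enum_rank 1%g)); rewrite !mxE enum_rankK mulgV.
by apply/eqP; apply: irr1_neq0.
Qed.

End Eig.


Lemma size_cancel (f P : {poly algC}) m : size f = m.+1 -> size P = m.+1 ->
  lead_coef P = lead_coef f -> (size (f - P)%R <= m)%N.
Proof.
move=> sf sP lc; apply/leq_sizeP => j; rewrite leq_eqVlt => /orP[/eqP <-|ltj].
  have e1 : f`_m = lead_coef f by rewrite lead_coefE sf.
  have e2 : P`_m = lead_coef P by rewrite lead_coefE sP.
  by rewrite coefB e1 e2 lc subrr.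
by rewrite coefB !nth_default ?subr0 // ?sf ?sP.
Qed.

Section G2.
Variable K : {pred algC}.
Hypothesis Kd : GRing.divring_closed K.
HB.instance Definition _ := GRing.isDivringClosed.Build algC K Kd.

Lemma divK (p f : {poly algC}) : p \is monic -> p \is a polyOver K ->
  f \is a polyOver K ->
  exists2 r, r \is a polyOver K & (size r < size p)%N /\ exists q, f = q * p + r.
Proof.
move=> mp Kp; elim: {f}(size f) {-2}f (leqnn (size f)) => [|m IH] f sf Kf.
  exists f => //; split; last by exists 0; rewrite mul0r add0r.
  by apply: (leq_ltn_trans sf); rewrite size_poly_gt0 monic_neq0.
have [lt|ge] := ltnP (size f) (size p).
  by exists f => //; split => //; exists 0; rewrite mul0r add0r.
have p0 : (0 < size p)%N by rewrite size_poly_gt0 monic_neq0.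
have [sfm'|gtm] := leqP (size f) m; first exact: IH.
have sfm : size f = m.+1 by apply/eqP; rewrite eqn_leq sf gtm.
set d := (size f - size p)%N; set c := lead_coef f.
have c0 : c != 0 by rewrite lead_coef_eq0 -size_poly_gt0 sfm.
set P := c *: 'X^d * p.
have KP : P \is a polyOver K.
  by rewrite rpredM // polyOverZ ?polyOverXn //; apply/polyOverP.
have sP : size P = m.+1.
  rewrite size_Mmonic // ?size_scale // ?size_polyXn -?scaler_eq0 ?c0 //.
    by rewrite addSn /= /d subnK // -sfm.
  by rewrite scaler_eq0 negb_or c0 -size_poly_eq0 size_polyXn.
have lP : lead_coef P = c by rewrite lead_coef_Mmonic // lead_coefZ lead_coefXn mulr1.
have [r Kr [sr [q Eq]]] := IH (f - P) (size_cancel sfm sP lP) (rpredB Kf KP).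
exists r => //; split => //; exists (q + c *: 'X^d).
by rewrite mulrDl -addrAC -Eq /P subrK.
Qed.

Lemma minpoly_ex (z : algC) (q0 : {poly algC}) : q0 \is monic ->
  q0 \is a polyOver K -> root q0 z ->
  exists p, [/\ p \is monic, p \is a polyOver K, root p z &
    forall f, f \is a polyOver K -> root f z -> (size f < size p)%N -> f = 0].
Proof.
elim: {q0}(size q0) {-2}q0 (leqnn (size q0)) => [|m IH] q sq mq Kq rq.
  by move: sq; rewrite leqn0 size_poly_eq0 (negbTE (monic_neq0 mq)).
case: (classic (exists f, [/\ f \is a polyOver K, root f z,
                 (size f < size q)%N & f != 0])).
  case=> f [Kf rf sf nf]; set f' := (lead_coef f)^-1 *: f.
  have l0 : lead_coef f != 0 by rewrite lead_coef_eq0.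
  apply: (IH f').
  - by rewrite size_scale ?invr_eq0 // -ltnS (leq_trans sf).
  - by rewrite monicE lead_coefZ mulVf.
  - by rewrite polyOverZ // rpredV; apply/polyOverP.
  - by rewrite rootZ ?invr_eq0.
move=> nex; exists q; split => // f Kf rf sf.
case: (eqVneq f 0) => // nf; case: nex; exists f; split => //.
Qed.

Variable n : nat.
Variable z : algC.
Hypothesis pz : n.-primitive_root z.
Hypothesis Kz : forall x, x \in K -> in_Qz z x.

Lemma map_ratr_K (r0 : {poly rat}) : map_poly ratr r0 \is a polyOver K.
Proof. by apply/polyOverP => j; rewrite coef_map rpred_rat. Qed.

Lemma horner_aut (s : {rmorphism algC -> algC}) (r0 : {poly rat}) x :
  s (map_poly ratr r0).[x] = (map_poly ratr r0).[s x].
Proof.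
rewrite -horner_map -map_poly_comp; congr (_.[_]); apply: eq_map_poly => c /=.
by rewrite fmorph_rat.
Qed.

Lemma fixed_in_K x : in_Qz z x ->
  (forall k, (k < n)%N -> coprime k n -> forall s : {rmorphism algC -> algC},
     s z = z ^+ k -> (forall y, y \in K -> s y = y) -> s x = x) -> x \in K.
Proof.
move=> [f0 Ex] Hfix.
have n0 : (0 < n)%N := prim_order_gt0 pz.
have KPhi : cyclotomic z n \is a polyOver K.
  by rewrite -(Cintr_Cyclotomic pz); apply/polyOverP => j; rewrite coef_map rpred_int.
have rPhi : root (cyclotomic z n) z by rewrite root_cyclotomic.
have [p [mp Kp rp pmin]] := minpoly_ex (cyclotomic_monic z n) KPhi rPhi.
have Hdiv f : f \is a polyOver K -> root f z -> exists q, f = q * p.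
  move=> Kf rf; have [r Kr [sr [q Eq]]] := divK mp Kp Kf.
  have rr : root r z.
    by move: rf; rewrite /root Eq hornerD hornerM (eqP rp) mulr0 add0r.
  by exists q; rewrite Eq (pmin r Kr rr sr) addr0.
have [q Eq] := Hdiv _ KPhi rPhi.
have : p %| \prod_(k <- [seq k : 'I_n <- index_enum 'I_n | coprime k n]) ('X - (z ^+ (val k))%:P).
  by rewrite big_filter -/(cyclotomic z n); apply/dvdpP; exists q.
case/dvdp_prod_XsubC => msk.
set ks := mask msk _; rewrite eqp_monic ?monic_prod_XsubC // => /eqP Ep.
have uks : uniq ks by rewrite mask_uniq // filter_uniq // index_enum_uniq.
have cks k : k \in ks -> coprime k n.
  by move/mem_mask; rewrite mem_filter => /andP[].
set rs := [seq z ^+ (val k) | k <- ks].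
have urs : uniq rs.
  rewrite map_inj_in_uniq // => i j _ _ /eqP; rewrite (eq_prim_root_expr pz).
  by rewrite !modn_small ?ltn_ord // => /eqP /val_inj.
have Ep' : p = \prod_(w <- rs) ('X - w%:P) by rewrite Ep big_map.
have rootp k : k \in ks -> root p (z ^+ k).
  by move=> kk; rewrite Ep' root_prod_XsubC; apply: map_f.
have aut k : k \in ks -> exists s : {rmorphism algC -> algC},
    s z = z ^+ k /\ (forall y, y \in K -> s y = y).
  move=> kk; have [u Hu] := Qn_aut_exists (cks k kk).
  have uz : u z = z ^+ k by rewrite Hu // prim_expr_order.
  exists u; split => // y Ky.
  have [r0 Ey] := Kz Ky.
  have Kf : map_poly ratr r0 - y%:P \is a polyOver K.
    by rewrite rpredB ?map_ratr_K // polyOverC.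
  have rf : root (map_poly ratr r0 - y%:P) z.
    by rewrite /root hornerD hornerN hornerC -Ey subrr.
  have [q' Eq'] := Hdiv _ Kf rf.
  have : root (map_poly ratr r0 - y%:P) (z ^+ k).
    by rewrite Eq' rootM (rootp k kk) orbT.
  rewrite /root hornerD hornerN hornerC subr_eq0 => /eqP Ey'.
  by rewrite Ey horner_aut uz Ey'.
have [r Kr [sr [q1 EF]]] := divK mp Kp (map_ratr_K f0).
have xr : x = r.[z] by rewrite Ex EF hornerD hornerM (eqP rp) mulr0 add0r.
have g0 : r - x%:P = 0.
  apply: (@roots_geq_poly_eq0 _ _ rs).
  - apply/allP => w /mapP[k kk ->].
    have [s [sz sK]] := aut k kk.
    have := Hfix k (ltn_ord k) (cks k kk) s sz sK.
    rewrite {1}Ex horner_aut sz EF hornerD hornerM (eqP (rootp k kk)) mulr0 add0r => rk.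
    by rewrite /root hornerD hornerN hornerC rk subrr.
  - exact: urs.
  - have srs : size p = (size rs).+1 by rewrite Ep' size_prod_XsubC.
    apply: (leq_trans (size_polyD _ _)); rewrite size_polyN geq_max.
    rewrite -ltnS -srs sr /=; apply: (leq_trans (size_polyC_leq1 _)).
    move: rp; rewrite Ep'; case: (rs) => [|w rs'] //.
    by rewrite big_nil /root hornerC oner_eq0.
have -> : x = r`_0.
  by move/eqP: g0; rewrite subr_eq0 => /eqP ->; rewrite coefC.
by apply/polyOverP.
Qed.

End G2.


Lemma key (gT : finGroupType) (a : gT -> rat) (z : algC) (K : {pred algC}) :
  #|gT|.-primitive_root z -> (forall x y, a (x ^ y)%g = a x) ->
  intermediate_field z K ->
  (all_eigs_in a K <->
   forall k, (k < #|gT|)%N -> in_HK #|gT| z K k -> pow_fixed a k).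
Proof.
move=> pz aJ [Kd Kz].
pose b := fun g => ratr (a g) : algC.
have bJ : forall x y, b (x ^ y)%g = b x by move=> x y; rewrite /b aJ.
have EIG : all_eigs_in a K <-> forall i, omega b i \in K.
  split => [H i | H l].
    by apply: H; apply/(eig_omega aJ); exists i.
  by case/(eig_omega aJ) => i ->.
have Saut (s : {rmorphism algC -> algC}) k i : s z = z ^+ k ->
    s (omega b i) = (\sum_h b h * 'chi_i ((h ^+ k)^-1)%g) / 'chi_i 1%g.
  move=> sz; rewrite /omega fmorph_div rmorph_sum.
  have [-> _] := chi_aut i 1%g pz sz; rewrite expg1n; congr (_ / _).
  apply: eq_bigr => h _; rewrite rmorphM /b fmorph_rat.
  by have [-> _] := chi_aut i (h^-1)%g pz sz; rewrite expVgn.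
have Qom i : in_Qz z (omega b i).
  rewrite /omega; apply: in_QzM.
    by apply: in_Qz_sum => h; apply: in_QzM; [apply: in_Qz_rat | exact: (@chi_aut _ z idfun 1 i (h^-1)%g pz (esym (expr1 z))).2].
  by rewrite irr1_degree -(ratr_nat algC) -fmorphV; apply: in_Qz_rat.
rewrite EIG; split.
  move=> H k kn [ck [s [sz sK]]] g.
  have [k' Hk'] := pow_inv_exists ck.
  have Hk2 (h : gT) : ((h ^+ k') ^+ k = h)%g by rewrite -expgM mulnC expgM Hk'.
  have E (i : Iirr [set: gT]) : \sum_h (b ((h ^+ k') : gT)%g - b h) * 'chi_i (h^-1)%g = 0.
    have := sK _ (H i); rewrite (Saut s k i sz) /omega => /(mulIf (invr_neq0 (irr1_neq0 i))).
    move=> E; rewrite (reindex_inj (@can_inj _ _ (fun u : gT => (u ^+ k')%g) (fun u : gT => (u ^+ k)%g) Hk2)) /= in E.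
    rewrite (eq_bigr (fun h => b (h ^+ k')%g * 'chi_i h^-1%g)) in E; last by move=> h _; rewrite Hk2.
    rewrite (eq_bigr (fun h => b (h ^+ k')%g * 'chi_i h^-1%g - b h * 'chi_i h^-1%g)); last first.
      by move=> h _; rewrite mulrBl.
    by rewrite sumrB E subrr.
  have fJ : forall x y, (fun u => b (u ^+ k')%g - b u) (x ^ y)%g = (fun u => b (u ^+ k')%g - b u) x.
    by move=> x y /=; rewrite -conjXg !bJ.
  have [phi Hphi] := cf_of fJ.
  have phi0 : phi = 0.
    rewrite (cfun_sum_cfdot phi) big1 // => i _.
    rewrite cfdotE sumG (eq_bigr (fun h => (b (h ^+ k')%g - b h) * 'chi_i h^-1%g)).
      by rewrite E mulr0 scale0r.
    by move=> h _; rewrite Hphi irr_inv.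
  have := Hphi (g ^+ k)%g; rewrite phi0 cfunE Hk' => /esym/eqP; rewrite subr_eq0 => /eqP.
  by move/fmorph_inj.
move=> H i; apply: (fixed_in_K Kd pz Kz (Qom i)) => k kn ck s sz sK.
have Pk := H k kn (conj ck (ex_intro _ s (conj sz sK))).
have [k' Hk'] := pow_inv_exists ck.
rewrite (Saut s k i sz) /omega; congr (_ / _).
rewrite [RHS](reindex_inj (@can_inj _ _ (fun u : gT => (u ^+ k)%g) (fun u : gT => (u ^+ k')%g) Hk')) /=; apply: eq_bigr => h _.
by rewrite /b Pk.
Qed.


Theorem mainTheorem17 (gT : finGroupType) (alpha beta : gT -> rat)
  (z : algC) (K : {pred algC}) :
  #|gT|.-primitive_root z ->
  sym_class_fun alpha -> sym_class_fun beta ->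
  intermediate_field z K ->
  (forall k : nat, (k < #|gT|)%N ->
     ((in_HK #|gT| z K k /\ pow_fixed alpha k) <->
      (in_HK #|gT| z K k /\ pow_fixed beta k))) ->
  (all_eigs_in alpha K <-> all_eigs_in beta K).
Proof.
move=> pz [aJ _] [bJ _] KF H.
rewrite (key pz aJ KF) (key pz bJ KF).
split=> Hx k kn Hk.
  by case: ((H k kn).1 (conj Hk (Hx k kn Hk))).
by case: ((H k kn).2 (conj Hk (Hx k kn Hk))).
Qed.
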